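(* Let $\mathcal{B}$ be a $\sigma$-algebra on a nonempty set $E$. Every optimal measure on $\mathcal{B}$ is essential, and hence $\sigma$-principal, CCC and autocontinuous.
   Context: An optimal measure is a map $\nu:\mathcal{B}\to[0,\infty]$ with $\nu(\emptyset)=0$, $\nu(B\cup B')=\max(\nu(B),\nu(B'))$, continuous from below ($\nu(\bigcup_nB_n)=\lim_n\nu(B_n)$ for nondecreasing sequences in $\mathcal{B}$) and from above ($\nu(\bigcap_nB_n)=\lim_n\nu(B_n)$ for nonincreasing sequences in $\mathcal{B}$). $\nu$ is essential if there is a $\sigma$-finite $\sigma$-additive measure $m$ on $\mathcal{B}$ with $\nu(B)>0\iff m(B)>0$ for all $B\in\mathcal{B}$. A set $N\subset E$ is $\nu$-negligible if $N\subset G$ for some $G\in\mathcal{B}$ with $\nu(G)=0$. A $\sigma$-ideal of $\mathcal{B}$ is a nonempty $\mathcal{I}\subset\mathcal{B}$ closed under countable unions and under taking subsets belonging to $\mathcal{B}$; $\nu$ is $\sigma$-principal if for each $\sigma$-ideal $\mathcal{I}$ there is $L\in\mathcal{I}$ with $S\setminus L$ $\nu$-negligible for all $S\in\mathcal{I}$. $\nu$ is CCC if every family of pairwise disjoint non-$\nu$-negligible elements of $\mathcal{B}$ is countable. $\nu$ is autocontinuous if there is $f:E\to[0,\infty]$ with $\{f>t\}\in\mathcal{B}$ for all $t\ge0$ and $\nu(B)=\inf\{t>0:B\cap\{f>t\}\text{ is }\nu\text{-negligible}\}$ for all $B\in\mathcal{B}$. *)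

(* Defs.v *)
From HB Require Import structures.
From mathcomp Require Import all_boot all_order all_algebra.
From mathcomp Require Import all_classical all_reals all_analysis.
Set Implicit Arguments. Unset Strict Implicit. Unset Printing Implicit Defensive.
Import Order.TTheory GRing.Theory Num.Theory.
Local Open Scope classical_set_scope.
Local Open Scope ring_scope.
Local Open Scope ereal_scope.

Section OptimalMeasures.
Context {d : measure_display} {T : measurableType d} {R : realType}.
Implicit Types (nu : set T -> \bar R).

Definition optimal_measure nu : Prop :=
  [/\ nu set0 = 0,
      (forall A, measurable A -> 0 <= nu A),
      (forall A B, measurable A -> measurable B ->
         nu (A `|` B) = maxe (nu A) (nu B)),
      (forall F : nat -> set T, (forall n, measurable (F n)) ->
         {homo F : n m / (n <= m)%N >-> n `<=` m} ->
         (nu \o F) @ \oo --> nu (\bigcup_n F n)) &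
      (forall F : nat -> set T, (forall n, measurable (F n)) ->
         {homo F : n m / (n <= m)%N >-> m `<=` n} ->
         (nu \o F) @ \oo --> nu (\bigcap_n F n))].

Definition nu_negligible nu (N : set T) : Prop :=
  exists G, [/\ measurable G, N `<=` G & nu G = 0].

Definition essential nu : Prop :=
  exists m : {measure set T -> \bar R},
    sigma_finite [set: T] m /\
    (forall B, measurable B -> (0 < nu B <-> 0 < m B)).

Definition sigma_ideal (I : set (set T)) : Prop :=
  [/\ I !=set0,
      I `<=` measurable,
      (forall F : nat -> set T, (forall n, I (F n)) -> I (\bigcup_n F n)) &
      (forall A B, I A -> measurable B -> B `<=` A -> I B)].

Definition sigma_principal nu : Prop :=
  forall I, sigma_ideal I ->
    exists2 L, I L & forall S, I S -> nu_negligible nu (S `\` L).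

Definition CCC nu : Prop :=
  forall F : set (set T),
    F `<=` measurable ->
    (forall A, F A -> ~ nu_negligible nu A) ->
    (forall A B, F A -> F B -> A <> B -> A `&` B = set0) ->
    countable F.

Definition autocontinuous nu : Prop :=
  exists f : T -> \bar R,
    [/\ (forall x, 0 <= f x),
        (forall t : R, (0 <= t)%R -> measurable [set x | t%:E < f x]) &
        (forall B, measurable B ->
           nu B = ereal_inf [set t%:E | t in
             [set t : R | (0 < t)%R /\
                nu_negligible nu (B `&` [set x | t%:E < f x])]])].

End OptimalMeasures.

(* Main.v *)
Require Import Defs.
From HB Require Import structures.
From mathcomp Require Import all_boot all_order all_algebra.
From mathcomp Require Import all_classical all_reals all_analysis.
From mathcomp Require Import zify finmap ring lra.
Set Implicit Arguments. Unset Strict Implicit. Unset Printing Implicit Defensive.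
Import Order.TTheory GRing.Theory Num.Theory.
Local Open Scope classical_set_scope.
Local Open Scope ring_scope.
Local Open Scope ereal_scope.

Section Opt.
Context d (T : measurableType d) (R : realType) (nu : set T -> \bar R).
Hypothesis Hnu : optimal_measure nu.

Lemma nu0 : nu set0 = 0. Proof. by have [] := Hnu. Qed.
Lemma nu_ge0 A : measurable A -> 0 <= nu A. Proof. by have [_ h _ _ _] := Hnu; exact: h. Qed.
Lemma nu_max A B : measurable A -> measurable B -> nu (A `|` B) = maxe (nu A) (nu B).
Proof. by have [_ _ h _ _] := Hnu; exact: h. Qed.
Lemma nu_up (F : nat -> set T) : (forall n, measurable (F n)) ->
  {homo F : n m / (n <= m)%N >-> n `<=` m} -> (nu \o F) @ \oo --> nu (\bigcup_n F n).
Proof. by have [_ _ _ h _] := Hnu; exact: h. Qed.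
Lemma nu_down (F : nat -> set T) : (forall n, measurable (F n)) ->
  {homo F : n m / (n <= m)%N >-> m `<=` n} -> (nu \o F) @ \oo --> nu (\bigcap_n F n).
Proof. by have [_ _ _ _ h] := Hnu; exact: h. Qed.

Lemma nu_mono A B : measurable A -> measurable B -> A `<=` B -> nu A <= nu B.
Proof.
move=> mA mB AB; by rewrite -((setUidPr _ _).2 AB) nu_max // le_max lexx.
Qed.

Lemma neglP A : measurable A -> nu_negligible nu A <-> nu A = 0.
Proof.
move=> mA; rewrite /nu_negligible; split.
  case=> G [mG AG G0]; apply/eqP; rewrite eq_le nu_ge0 // andbT -G0.
  exact: nu_mono.
by move=> A0; exists A; split.
Qed.

Lemma nu_bigcup_le (F : nat -> set T) c : (forall n, measurable (F n)) ->
  (forall n, nu (F n) <= c) -> nu (\bigcup_n F n) <= c.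
Proof.
move=> mF Fc.
pose G n := \big[setU/set0]_(i < n.+1) F i.
have mG n : measurable (G n) by apply: bigsetU_measurable => i _.
have Gc n : nu (G n) <= c.
  elim: n => [|n ih]; first by rewrite /G big_ord_recr big_ord0 /= set0U; apply: Fc.
  rewrite /G big_ord_recr /= nu_max //; last by apply: bigsetU_measurable.
  by rewrite ge_max Fc andbT.
rewrite -bigcup_bigsetU_bigcup.
apply: (cvge_to_le (nu_up mG _)); last by apply: nearW.
move=> n m nm; rewrite /G -!bigcup_mkord => x [i /= im Fix]; exists i => //=.
exact: leq_trans nm.
Qed.

Lemma nu_bigcup0 (F : nat -> set T) : (forall n, measurable (F n)) ->
  (forall n, nu (F n) = 0) -> nu (\bigcup_n F n) = 0.
Proof.
move=> mF F0; apply/eqP; rewrite eq_le nu_ge0 ?andbT; last exact: bigcupT_measurable.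
by apply: nu_bigcup_le => // n; rewrite F0.
Qed.


Fixpoint memS (B : set T) (s : seq (set T)) : Prop :=
  if s is A :: s' then A = B \/ memS B s' else False.

Lemma memS_cat B s1 s2 : memS B (s1 ++ s2) <-> memS B s1 \/ memS B s2.
Proof.
elim: s1 => [|A s1 ih] /=; first by split=> [|[]//]; right.
rewrite ih; tauto.
Qed.

Fixpoint good (e : R) (X : set T) (s : seq (set T)) : Prop :=
  if s is A :: s' then
    [/\ measurable A, A `<=` X, e%:E < nu A,
        (forall B, memS B s' -> A `&` B = set0) & good e X s']
  else True.

Lemma good_sub e X Y s : X `<=` Y -> good e X s -> good e Y s.
Proof.
move=> XY; elim: s => [//|A s ih] /= [mA AX eA dA gs]; split => //.
  exact: subset_trans XY.
exact: ih.
Qed.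

Lemma good_mem e X s A : good e X s -> memS A s ->
  [/\ measurable A, A `<=` X & e%:E < nu A].
Proof.
elim: s => [//|B s ih] /= [mB BX eB dB gs] [<-//|As].
exact: ih.
Qed.

Lemma good_cat e X s1 s2 : good e X s1 -> good e X s2 ->
  (forall A B, memS A s1 -> memS B s2 -> A `&` B = set0) ->
  good e X (s1 ++ s2).
Proof.
elim: s1 => [//|A s1 ih] /= [mA AX eA dA gs] g2 d12; split => //.
  move=> B /memS_cat [Bs1|Bs2]; first exact: dA.
  by apply: d12 => //; left.
by apply: ih => // A' B As1 Bs2; apply: d12 => //; right.
Qed.

Lemma pigeon e X C s : good e X s -> measurable C ->
  exists s1, exists s2,
  [/\ good e (X `&` C) s1, good e (X `\` C) s2,
      (size s <= size s1 + size s2)%N,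
      (forall B, memS B s1 -> exists2 B', memS B' s & B `<=` B') &
      (forall B, memS B s2 -> exists2 B', memS B' s & B `<=` B')].
Proof.
move=> + mC; elim: s => [_|A s ih] /=.
  by exists [::], [::]; split.
move=> [mA AX eA dA /ih [s1 [s2 [g1 g2 sz h1 h2]]]].
have : e%:E < maxe (nu (A `&` C)) (nu (A `\` C)).
  by rewrite -nu_max ?setUIDK //; [exact: measurableI|exact: measurableD].
rewrite lt_max => /orP[eI|eD].
- exists (A `&` C :: s1), s2; split => //=.
  + split => //; first exact: measurableI.
    * by move=> x [Ax Cx]; split => //; exact: AX.
    * move=> B /h1 [B' /dA AB' BB']; apply/seteqP; split => // x [[Ax _] Bx].
      by rewrite -AB'; split => //; exact: BB'.
  + move=> B [<-|/h1 [B' sB' BB']]; first by exists A; [left|move=> x []].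
    by exists B' => //; right.
  + by move=> B /h2 [B' sB' BB']; exists B' => //; right.
- exists s1, (A `\` C :: s2); split => //=.
  + split => //; first exact: measurableD.
    * by move=> x [Ax Cx]; split => //; exact: AX.
    * move=> B /h2 [B' /dA AB' BB']; apply/seteqP; split => // x [[Ax _] Bx].
      by rewrite -AB'; split => //; exact: BB'.
  + by rewrite addnS ltnS.
  + by move=> B /h1 [B' sB' BB']; exists B' => //; right.
  + move=> B [<-|/h2 [B' sB' BB']]; first by exists A; [left|move=> x []].
    by exists B' => //; right.
Qed.

Definition Unb e X := forall n, exists s, good e X s /\ (n <= size s)%N.

Lemma notUnb e X : ~ Unb e X -> exists n, forall s, good e X s -> (size s < n)%N.
Proof.
move=> /existsNP [n hn]; exists n => s gs; rewrite ltnNge; apply/negP => ns.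
by apply: hn; exists s.
Qed.

Lemma Unb_split e X C : measurable C -> Unb e X ->
  Unb e (X `&` C) \/ Unb e (X `\` C).
Proof.
move=> mC UX; apply: contrapT => /not_orP [/notUnb [n1 h1] /notUnb [n2 h2]].
have [s [gs ss]] := UX (n1 + n2)%N.
have [s1 [s2 [g1 g2 sz _ _]]] := pigeon gs mC.
have := leq_trans ss sz; rewrite leqNgt => /negP; apply.
by have := h1 _ g1; have := h2 _ g2; lia.
Qed.


Lemma Unb_step e X : measurable X -> Unb e X ->
  exists C, [/\ measurable C, C `<=` X, e%:E < nu C & Unb e (X `\` C)].
Proof.
move=> mX UX; have [s [gs s2]] := UX 2%N.
case: s gs s2 => [//|B1 [//|B2 s]] /= [mB1 B1X eB1 dB1 [mB2 B2X eB2 _ _]] _.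
have [UI|UD] := Unb_split mB1 UX; last by exists B1.
exists (X `\` B1); split => //; first exact: measurableD.
- apply: lt_le_trans eB2 _; apply: nu_mono => //; first exact: measurableD.
  move=> x B2x; split; first exact: B2X.
  move=> B1x; have : (B1 `&` B2) x by [].
  by rewrite dB1 //; left.
- by rewrite setDD.
Qed.

Lemma no_disj_seq e (C : nat -> set T) : (0 < e)%R ->
  (forall n, measurable (C n)) -> (forall n, e%:E < nu (C n)) ->
  (forall n m, (n < m)%N -> C n `&` C m = set0) -> False.
Proof.
move=> e0 mC eC dC.
pose D n := \bigcup_k C (k + n)%N.
have mD n : measurable (D n) by apply: bigcupT_measurable.
have hD : {homo D : n m / (n <= m)%N >-> m `<=` n}.
  move=> n m nm x [k _ Cx]; exists (k + (m - n))%N => //.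
  by rewrite -addnA (subnK nm).
have D0 : \bigcap_n D n = set0.
  apply/seteqP; split => // x Dx.
  have [j _ Cj] := Dx 0%N I; have [k _ Ck] := Dx j.+1 I.
  have : (C j `&` C (k + j.+1)%N) x by split => //; rewrite addn0 in Cj.
  by rewrite dC //; rewrite addnS ltnS leq_addl.
have := nu_down mD hD; rewrite D0 nu0 => /cvge_to_ge h.
suff: e%:E <= 0 by rewrite lee_fin leNgt e0.
apply: h; apply: nearW => n /=; apply/ltW/(lt_le_trans (eC n)).
apply: nu_mono => //; move=> x Cx; exists 0%N => //.
Qed.

Lemma bounded e : (0 < e)%R -> exists M, forall s, good e setT s -> (size s <= M)%N.
Proof.
move=> e0; apply: contrapT => /forallNP hM.
have U : Unb e setT.
  move=> n; have /existsNP [s /not_implyP [gs ns]] := hM n.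
  by exists s; split => //; rewrite leqNgt; apply/negP => /ltnW.
pose Q (X C : set T) := measurable X /\ Unb e X ->
  [/\ measurable C, C `<=` X, e%:E < nu C & Unb e (X `\` C)].
have [g hg] : {g & forall X, Q X (g X)}.
  apply: choice => X; have [[mX UX]|nX] := pselect (measurable X /\ Unb e X).
    by have [C hC] := Unb_step mX UX; exists C.
  by exists set0.
pose fix Rs n := if n is n'.+1 then Rs n' `\` g (Rs n') else setT.
have inv n : measurable (Rs n) /\ Unb e (Rs n).
  elim: n => [|n [mR UR]] /=; first by [].
  by have [mg _ _ Ug] := hg _ (conj mR UR); split => //; exact: measurableD.
have dec n m : (n <= m)%N -> Rs m `<=` Rs n.
  move=> /subnKC <-; elim: (m - n)%N => [|k ih]; first by rewrite addn0.
  by rewrite addnS /= => x [/ih].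
apply: (@no_disj_seq e (fun n => g (Rs n)) e0).
- by move=> n; have [] := hg _ (inv n).
- by move=> n; have [] := hg _ (inv n).
- move=> n m nm; apply/seteqP; split => // x [gn gm].
  have [_ gmR _ _] := hg _ (inv m).
  by have /= [_] := dec _ _ nm x (gmR x gm); apply.
Qed.


Definition ek (k : nat) : R := (k.+1%:R)^-1.
Lemma ek_gt0 k : (0 < ek k)%R. Proof. by rewrite /ek invr_gt0 ltr0n. Qed.

Definition Mk k : nat := projT1 (cid (bounded (ek_gt0 k))).
Lemma MkP k s : good (ek k) setT s -> (size s <= Mk k)%N.
Proof. by rewrite /Mk; case: cid => M /= hM; exact: hM. Qed.

Definition Pk k X : pred nat := fun n => `[< exists s, good (ek k) X s /\ size s = n >].
Lemma Pk_ex k X : exists n, Pk k X n.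
Proof. by exists 0%N; apply/asboolP; exists [::]. Qed.
Lemma Pk_ub k X n : Pk k X n -> (n <= Mk k)%N.
Proof.
move=> /asboolP [s [gs <-]]; apply: MkP; exact: good_sub gs.
Qed.

Definition N k X : nat := ex_maxn (Pk_ex k X) (@Pk_ub k X).

Lemma N_ge k X s : good (ek k) X s -> (size s <= N k X)%N.
Proof.
move=> gs; rewrite /N; case: ex_maxnP => i _; apply; apply/asboolP; by exists s.
Qed.

Lemma N_ex k X : exists s, good (ek k) X s /\ size s = N k X.
Proof. by rewrite /N; case: ex_maxnP => i /asboolP. Qed.


Lemma N_mono k X Y : X `<=` Y -> (N k X <= N k Y)%N.
Proof. by move=> XY; have [s [gs <-]] := N_ex k X; apply: N_ge; exact: good_sub gs. Qed.

Lemma N_add k X Y : measurable X -> X `&` Y = set0 ->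
  N k (X `|` Y) = (N k X + N k Y)%N.
Proof.
move=> mX XY; apply/eqP; rewrite eqn_leq; apply/andP; split.
  have [s [gs <-]] := N_ex k (X `|` Y).
  have [s1 [s2 [g1 g2 sz _ _]]] := pigeon gs mX.
  apply: (leq_trans sz); apply: leq_add; apply: N_ge.
    by apply: good_sub g1 => x [].
  by apply: good_sub g2 => x [[]].
have [s1 [g1 <-]] := N_ex k X; have [s2 [g2 <-]] := N_ex k Y.
rewrite -size_cat; apply: N_ge; apply: good_cat.
- by apply: good_sub g1 => x; left.
- by apply: good_sub g2 => x; right.
- move=> A B /(good_mem g1) [_ AX _] /(good_mem g2) [_ BY _].
  by apply/seteqP; split => // x [/AX Xx /BY Yx]; rewrite -XY.
Qed.

Lemma N_pos k X : measurable X -> (ek k)%:E < nu X -> (0 < N k X)%N.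
Proof. by move=> mX eX; apply: (@N_ge k X [:: X]); split. Qed.

Lemma N_zero k X : measurable X -> nu X = 0 -> N k X = 0%N.
Proof.
move=> mX X0; have [s [gs sN]] := N_ex k X; rewrite -sN.
case: s gs {sN} => [//|A s] [mA AX eA _ _]; exfalso.
have : (ek k)%:E < 0 by rewrite -X0; apply: lt_le_trans eA _; exact: nu_mono.
by rewrite lte_fin ltNge (ltW (ek_gt0 k)).
Qed.

Lemma memS_map (f : set T -> set T) B s : memS B (map f s) ->
  exists2 B', memS B' s & B = f B'.
Proof.
elim: s => [//|A s ih] /= [<-|/ih [B' sB' ->]]; first by exists A; [left|].
by exists B' => //; right.
Qed.

Lemma cvg_gt (u : nat -> \bar R) l c : u @ \oo --> l -> c < l -> exists n, c < u n.
Proof.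
move=> ul cl; apply: contrapT => /forallNP h.
have : l <= c by apply: (cvge_to_le ul); apply: nearW => n; rewrite leNgt; apply/negP/h.
by rewrite leNgt cl.
Qed.


Section Seq.
Variable F : nat -> set T.
Hypothesis mF : forall n, measurable (F n).
Hypothesis tF : trivIset setT F.
Let G n := \big[setU/set0]_(i < n) F i.

Let mG n : measurable (G n).
Proof. by apply: bigsetU_measurable => i _. Qed.

Let G_homo : {homo G : n m / (n <= m)%N >-> n `<=` m}.
Proof.
move=> n m nm; rewrite /G -!bigcup_mkord => x [i /= im Fix]; exists i => //=.
exact: leq_trans nm.
Qed.

Lemma N_fin k n : N k (G n) = (\sum_(i < n) N k (F i))%N.
Proof.
elim: n => [|n ih]; first by rewrite /G !big_ord0; apply: N_zero => //; exact: nu0.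
rewrite /G !big_ord_recr /= N_add //.
  by rewrite -ih.
  exact: mG.
apply/seteqP; split => // x []; rewrite -bigcup_mkord => -[i /= ilt Fix] Fnx.
have in_ : i = n by apply: tF => //; exists x.
by move: ilt; rewrite in_ ltnn.
Qed.

Lemma good_lim e s : good e (\bigcup_n F n) s ->
  exists n0, forall n, (n0 <= n)%N -> good e (G n) (map (fun A => A `&` G n) s).
Proof.
elim: s => [_|A s ih]; first by exists 0%N.
move=> [mA AU eA dA /ih [n1 h1]].
have mH n : measurable (A `&` G n) by exact: measurableI.
have hH : {homo (fun n => A `&` G n) : n m / (n <= m)%N >-> n `<=` m}.
  by move=> n m nm x [Ax Gx]; split => //; exact: G_homo nm _ Gx.
have UH : \bigcup_n (A `&` G n) = A.
  apply/seteqP; split => [x [n _ []//]|x Ax].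
  have [i _ Fix] := AU x Ax; exists i.+1 => //; split => //.
  by apply: (bigsetU_sup (ltnSn i)).
have := nu_up mH hH; rewrite UH => /cvg_gt /(_ eA) [n2 h2].
exists (maxn n1 n2) => n; rewrite geq_max => /andP[n1n n2n] /=; split => //.
- apply: lt_le_trans h2 _; apply: nu_mono => //.
  by move=> x [Ax Gx]; split => //; exact: G_homo n2n _ Gx.
- move=> B /memS_map [B' sB' ->]; apply/seteqP; split => // x [[Ax _] [B'x _]].
  by rewrite -(dA _ sB').
- exact: h1.
Qed.

Lemma N_lim k : exists n0, forall n, (n0 <= n)%N -> N k (G n) = N k (\bigcup_n F n).
Proof.
have [s [gs sN]] := N_ex k (\bigcup_n F n).
have [n0 h] := good_lim gs; exists n0 => n n0n; apply/eqP; rewrite eqn_leq.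
rewrite N_mono /=; last by apply: bigsetU_bigcup.
by rewrite -sN -(size_map (fun A => A `&` G n)); apply: N_ge; exact: h.
Qed.

End Seq.


Definition mk k (X : set T) : \bar R :=
  ((N k X)%:R / (N k setT).+1%:R * (1 / (2 ^ (k + 1))%:R))%:E.

Section MkMeasure.
Variable k : nat.

Let mk0 : mk k set0 = 0.
Proof. by rewrite /mk N_zero ?nu0 // mul0r mul0r. Qed.

Let mk_ge0 X : 0 <= mk k X.
Proof. by rewrite /mk lee_fin !mulr_ge0 // invr_ge0. Qed.

Let mk_sigma : semi_sigma_additive (mk k).
Proof.
move=> F mF tF mUF; have [n0 h] := N_lim mF k.
apply: cvg_near_cst; exists n0 => // n /= n0n.
rewrite /mk -(h n n0n) N_fin // sumEFin big_mkord natr_sum !mulr_suml.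
by [].
Qed.

HB.instance Definition _ := isMeasure.Build _ _ _ (mk k) mk0 mk_ge0 mk_sigma.

End MkMeasure.

Definition mkm (k : nat) : {measure set T -> \bar R} := mk k.

Definition mtot := mseries mkm 0.


Lemma ek_lt x : 0 < x -> exists k, (ek k)%:E < x.
Proof.
case: x => [r|_|//]; last by exists 0%N; rewrite ltry.
rewrite lte_fin => r0; exists (Num.truncn r^-1); rewrite lte_fin /ek.
have ri : (0 <= r^-1)%R by rewrite invr_ge0 ltW.
rewrite invf_plt ?posrE ?ltr0n ?invr_gt0 //.
by case/andP: (truncn_itv ri).
Qed.

Lemma mtotE B : mtot B = \sum_(0 <= k <oo) mk k B.
Proof. by []. Qed.

Lemma mtot_pos B : measurable B -> (0 < nu B <-> 0 < mtot B).
Proof.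
move=> mB; split.
  move=> /ek_lt [k ek]; apply: (@lt_le_trans _ _ (mk k B)).
    rewrite /mk lte_fin !mulr_gt0 // ?ltr0n ?invr_gt0 ?ltr0n ?expn_gt0 //.
    exact: N_pos.
  rewrite mtotE; apply: le_trans (nneseries_lim_ge k.+1 _); last by move=> n _ _; exact: measure_ge0.
  by rewrite big_nat_recr //= leeDr // sume_ge0 // => n _; exact: measure_ge0.
apply: contraPP => /negP; rewrite -leNgt => nu0B.
have B0 : nu B = 0 by apply/eqP; rewrite eq_le nu0B nu_ge0.
rewrite mtotE eseries0; first by rewrite ltxx.
by move=> k _ _; rewrite /mk N_zero // !mul0r.
Qed.

Lemma mtot_fin : mtot setT < +oo.
Proof.
apply: (@le_lt_trans _ _ 1); last exact: ltry.
have geo := @cvg_geometric_eseries_half R 1%R 0.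
rewrite expr0 divr1 in geo.
rewrite -(cvg_lim _ geo) // mtotE; apply: lee_nneseries.
  by move=> n _ _; exact: measure_ge0.
move=> n _; rewrite /mk lee_fin ler_piMl // ?divr_ge0 //.
by rewrite ler_pdivrMr ?ltr0n // mul1r ler_nat.
Qed.

Lemma essentialP : essential nu.
Proof.
exists (mseries mkm 0); split; last exact: mtot_pos.
exists (fun=> setT); first by rewrite bigcup_const.
by move=> _; split => //; exact: mtot_fin.
Qed.


Lemma N_le_Mk k X : (N k X <= Mk k)%N.
Proof. have [s [gs <-]] := N_ex k X; apply: MkP; exact: good_sub gs. Qed.

Lemma principalP : sigma_principal nu.
Proof.
move=> I [[S0 IS0] Im IU Isub].
have I0 : I set0 by apply: (Isub S0 set0 IS0 measurable0); exact: sub0set.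
have [Sk hSk] : {Sk : nat -> set T & forall k, I (Sk k) /\
    forall S, I S -> (N k S <= N k (Sk k))%N}.
  apply: (@choice nat (set T) (fun k S => I S /\ forall S', I S' -> (N k S' <= N k S)%N)) => k.
  pose P : pred nat := fun n => `[< exists S, I S /\ (n <= N k S)%N >].
  have exP : exists n, P n by exists 0%N; apply/asboolP; exists S0.
  have ubP : forall n, P n -> (n <= Mk k)%N.
    by move=> n /asboolP [S [_ nS]]; exact: leq_trans nS (N_le_Mk k S).
  case: (ex_maxnP exP ubP) => n /asboolP [S [IS nS]] hmax.
  exists S; split => // S' IS'; apply: leq_trans nS.
  by apply: hmax; apply/asboolP; exists S'.
pose L := \bigcup_k Sk k.
have IL : I L by apply: IU => k; case: (hSk k).
exists L => // S IS.
have mL := Im _ IL; have mS := Im _ IS.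
have IU2 : I (L `|` S).
  rewrite -bigcup2E; apply: IU => -[|[|n]] //=.
have mSL : measurable (S `\` L) by exact: measurableD.
apply/(neglP mSL); apply/eqP; rewrite eq_le nu_ge0 // andbT leNgt; apply/negP.
move=> /ek_lt [k ekS].
have [_ hmax] := hSk k.
have := hmax _ IU2; rewrite -(setDUK (@subsetUl _ L S)) N_add //.
  rewrite setDUD setDv set0U.
  have := N_pos mSL ekS; have : (N k (Sk k) <= N k L)%N.
    by apply: N_mono => x Skx; exists k.
  lia.
exact: setDIK.
Qed.


Lemma memS_in B s : memS B s -> B \in s.
Proof.
elim: s => [//|A s ih] /= [->|/ih Bs]; rewrite in_cons; first by rewrite eqxx.
by rewrite Bs orbT.
Qed.

Lemma good_of_seq k (P : set (set T)) s : uniq s -> (forall A, A \in s -> P A) ->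
  (forall A, P A -> measurable A /\ (ek k)%:E < nu A) ->
  (forall A B, P A -> P B -> A <> B -> A `&` B = set0) -> good (ek k) setT s.
Proof.
move=> + + hP dP; elim: s => [//|A s ih] /= /andP[As us] sP.
have [mA eA] := hP _ (sP A (mem_head _ _)); split => //.
  move=> B /memS_in Bs; apply: dP; [exact: sP (mem_head _ _)|
    by apply: sP; rewrite in_cons Bs orbT|].
  by move=> AB; move: As; rewrite AB Bs.
by apply: ih => // B Bs; apply: sP; rewrite in_cons Bs orbT.
Qed.

Lemma CCCP : CCC nu.
Proof.
move=> F Fm Fn Fd.
pose Fk k := [set A | F A /\ (ek k)%:E < nu A].
have FFk : F `<=` \bigcup_k Fk k.
  move=> A FA; have mA := Fm _ FA.
  have : 0 < nu A.
    rewrite lt_neqAle nu_ge0 // andbT eq_sym; apply/eqP => A0.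
    by apply: (Fn _ FA); apply/(neglP mA).
  by move=> /ek_lt [k h]; exists k.
apply: sub_countable (subset_card_le FFk) _.
apply: bigcup_countable; first exact: countableP.
move=> k _; apply: finite_set_countable; apply: contrapT.
move=> /(infinite_set_fset (Mk k).+1) [B BF szB].
have gB : good (ek k) setT (enum_fset B).
  apply: (@good_of_seq k (Fk k)); first exact: fset_uniq.
  - by move=> A AB; apply: BF.
  - by move=> A [FA eA]; split => //; exact: Fm.
  - by move=> A A' [FA _] [FA' _]; exact: Fd.
by have := MkP gB; rewrite leqNgt szB.
Qed.


Definition qq (j : nat) : R :=
  if @choice.unpickle (prod nat nat) j is Some (m, k) then (m.+1%:R / k.+1%:R)%R else 1%R.

Lemma qq_gt0 j : (0 < qq j)%R.
Proof. by rewrite /qq; case: choice.unpickle => [[m k]|] //; rewrite divr_gt0 ?ltr0n. Qed.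

Lemma qq_dense (a b : R) : (0 <= a)%R -> (a < b)%R -> exists j, (a < qq j < b)%R.
Proof.
move=> a0 ab.
have ba : (0 < b - a)%R by rewrite subr_gt0.
pose k := Num.truncn (b - a)^-1; pose K : R := k.+1%:R.
have hk : ((b - a)^-1 < K)%R.
  have ri : (0 <= (b - a)^-1)%R by rewrite invr_ge0 ltW.
  by case/andP: (truncn_itv ri).
have K0 : (0 < K)%R by rewrite ltr0n.
have h3 : (1 < (b - a) * K)%R.
  by rewrite -(mulfV (lt0r_neq0 ba)) ltr_pM2l.
have aK : (0 <= a * K)%R by rewrite mulr_ge0 // ltW.
pose m := Num.truncn (a * K).
have /andP[h1 h2] := truncn_itv aK.
exists (choice.pickle (m, k)); rewrite /qq choice.pickleK.
rewrite ltr_pdivlMr // ltr_pdivrMr //; apply/andP; split; first exact: h2.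
rewrite -/K; move: h1 h3; rewrite -/m => h1 h3.
have -> : (m.+1%:R = m%:R + 1 :> R)%R by rewrite -natr1.
have : (b * K = a * K + (b - a) * K)%R by rewrite mulrBl addrC subrK.
lra.
Qed.


Lemma W_ex j : exists W, [/\ measurable W, nu W <= (qq j)%:E &
  forall S, measurable S -> nu S <= (qq j)%:E -> nu (S `\` W) = 0].
Proof.
pose I := [set G | measurable G /\ nu G <= (qq j)%:E].
have sI : sigma_ideal I.
  split.
  - exists set0; split => //; by rewrite nu0 lee_fin ltW ?qq_gt0.
  - by move=> G [].
  - move=> F hF; split; first by apply: bigcupT_measurable => n; case: (hF n).
    by apply: nu_bigcup_le => n; case: (hF n).
  - move=> A B [mA hA] mB BA; split => //; apply: le_trans hA; exact: nu_mono.
have [L [mL hL] hS] := principalP sI.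
exists L; split => // S mS hS'.
by apply/neglP; [exact: measurableD|exact: hS].
Qed.

Lemma autocontP : autocontinuous nu.
Proof.
have [W hW] := choice W_ex.
pose f x := ereal_inf [set (qq j)%:E | j in [set j | W j x]].
have mW j : measurable (W j) by case: (hW j).
have fq j x : W j x -> f x <= (qq j)%:E.
  by move=> Wx; apply: ge_ereal_inf; exists (qq j)%:E => //; exists j.
have ha B t : measurable B -> (0 < t)%R -> nu B < t%:E ->
    nu_negligible nu (B `&` [set x | t%:E < f x]).
  move=> mB t0 Bt.
  have B0 := nu_ge0 mB.
  move: B0 Bt; case hB: (nu B) => [r| |] //; rewrite ?lee_fin ?lte_fin => r0 rt.
  have [j /andP[rq qt]] := qq_dense r0 rt.
  have [_ _ hj] := hW j.
  exists (B `\` W j); split; first exact: measurableD.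
    move=> x [Bx tf]; split => // Wx.
    have := lt_le_trans tf (fq j x Wx); rewrite lte_fin => tq.
    by move: qt; rewrite ltNge (ltW tq).
  by apply: hj => //; rewrite hB lee_fin ltW.
have hb B t : measurable B -> (0 < t)%R -> t%:E < nu B ->
    ~ nu_negligible nu (B `&` [set x | t%:E < f x]).
  move=> mB t0 tB [G [mG BG G0]].
  have [t' [tt' t'B]] : exists t', (t < t')%R /\ t'%:E < nu B.
    move: tB; case: (nu B) => [r| |] //; last first.
      by move=> _; exists (t + 1)%R; split; [rewrite ltrDl|exact: ltry].
    rewrite lte_fin => tr; have [j /andP[h1 h2]] := qq_dense (ltW t0) tr.
    by exists (qq j); split => //; rewrite lte_fin.
  pose V := \bigcup_j (if (qq j < t')%R then W j else set0).
  have mV : measurable V.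
    by apply: bigcupT_measurable => j; case: ifP => _ //.
  have nV : nu V <= t'%:E.
    apply: nu_bigcup_le => [j|j]; first by case: ifP => _ //.
    case: ifPn => [qt|_]; last by rewrite nu0 lee_fin ltW // (lt_trans t0).
    by case: (hW j) => _ h _; apply: le_trans h _; rewrite lee_fin ltW.
  have BVG : B `\` V `<=` G.
    move=> x [Bx nVx]; apply: BG; split => //=.
    apply: (@lt_le_trans _ _ t'%:E); first by rewrite lte_fin.
    apply/ereal_infP => _ [j Wjx <-]; rewrite lee_fin leNgt; apply/negP => qt.
    by apply: nVx; exists j => //; rewrite qt.
  have nBV : nu (B `\` V) <= 0.
    by rewrite -G0; apply: nu_mono => //; exact: measurableD.
  have : maxe (nu (B `&` V)) (nu (B `\` V)) < nu B.
    rewrite gt_max; apply/andP; split.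
      apply: le_lt_trans t'B; apply: le_trans nV; apply: nu_mono => //.
        exact: measurableI.
    by apply: (le_lt_trans nBV); apply: (le_lt_trans _ tB); rewrite lee_fin ltW.
  rewrite -nu_max ?setUIDK ?ltxx //; [exact: measurableI|exact: measurableD].
exists f; split.
- by move=> x; apply/ereal_infP => _ [j _ <-]; rewrite lee_fin ltW // qq_gt0.
- move=> t t0.
  pose V n := \bigcup_j (if (qq j < t + ek n)%R then W j else set0).
  have fle x : (f x <= t%:E) <-> (forall n, V n x).
    split.
      move=> fx n; have : f x < (t + ek n)%:E.
        by apply: le_lt_trans fx _; rewrite lte_fin ltrDl ek_gt0.
      move=> /ereal_inf_lt [_ [j Wjx <-]]; rewrite lte_fin => qj.
      by exists j => //; rewrite qj.
    move=> h; apply/lee_addgt0Pr => e e0.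
    have [n hn] : exists n, (ek n)%:E < e%:E by apply: ek_lt; rewrite lte_fin.
    have [j _] := h n; case: ifPn => [qj Wx|_ []//].
    apply: le_trans (fq j x Wx) _; rewrite lee_fin; rewrite lte_fin in hn.
    by apply: ltW; apply: lt_le_trans qj _; rewrite lerD2l ltW.
  have -> : [set x | t%:E < f x] = ~` \bigcap_n V n.
    apply/seteqP; split => x /=.
      by move=> tf Vx; have := (fle x).2 (fun n => Vx n I); rewrite leNgt tf.
    move=> nV; rewrite ltNge; apply/negP => /(fle x) h; apply: nV => n _; exact: h.
  apply: measurableC; apply: bigcapT_measurable => n.
  by apply: bigcupT_measurable => j; case: ifP => _ //.
- move=> B mB; apply/eqP; rewrite eq_le; apply/andP; split.
    apply/ereal_infP => _ [t [t0 negl] <-]; rewrite leNgt; apply/negP => tB.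
    exact: (hb B t mB t0 tB negl).
  have B0 := nu_ge0 mB; move: B0; case hB: (nu B) => [r| |] //; last by move=> _; rewrite leey.
  rewrite lee_fin => r0; apply/lee_addgt0Pr => e e0; apply: ge_ereal_inf.
  exists ((r + e)%:E) => //; exists (r + e)%R => //; split.
    by rewrite ltr_wpDl.
  by apply: ha => //; [rewrite ltr_wpDl|rewrite hB lte_fin ltrDl].
Qed.

End Opt.

Unset Implicit Arguments.
Local Close Scope ereal_scope.
Local Close Scope ring_scope.

Theorem proposition6p6 (d : measure_display) (T : measurableType d)
  (R : realType) (hE : [set: T] !=set0) (nu : set T -> \bar R) :
  optimal_measure nu ->
  [/\ essential nu, sigma_principal nu, CCC nu & autocontinuous nu].
Proof.
move=> Hnu; split.
- exact: essentialP.
- exact: principalP.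
- exact: CCCP.
- exact: autocontP.
Qed.
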